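(* Let $N\ge1$ and let $A$ be an $(N+1)\times N$ complex matrix such that any set of $N$ rows of $A$ is linearly independent. Then the $N(N+1)\times N(N+1)$ matrix $$\hat A=\big[\, I_N\otimes A \ \ \ [D(A)]_{:,\{2,\dots,N+1\}}\,\big]$$ has full rank.
   Context: For a $K\times L$ matrix $B$ with entries $b_{ij}$, $D(B)$ denotes the $KL\times K$ matrix obtained by stacking vertically the diagonal matrices $\mathrm{diag}(b_{11},\dots,b_{K1}),\ \mathrm{diag}(b_{12},\dots,b_{K2}),\dots,\mathrm{diag}(b_{1L},\dots,b_{KL})$ (one $K\times K$ diagonal matrix per column of $B$). For a matrix $B$, $[B]_{:,\mathcal{S}}$ denotes the submatrix consisting of the columns indexed by $\mathcal{S}$. $\otimes$ is the Kronecker product. *)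

(* Defs.v *)
From HB Require Import structures.
From mathcomp Require Import all_boot all_order all_algebra.
Set Implicit Arguments. Unset Strict Implicit. Unset Printing Implicit Defensive.
Import GRing.Theory Num.Theory.
Local Open Scope ring_scope.

(* Entry of a matrix at natural-number indices (0 when out of range). *)
Definition natmx (R : nzRingType) m n (A : 'M[R]_(m, n)) (i j : nat) : R :=
  match (insub i : option 'I_m), (insub j : option 'I_n) with
  | Some i', Some j' => A i' j'
  | _, _ => 0
  end.

(* Kronecker product A ⊗ B (0-based indices):
   (A ⊗ B)_{i*m2 + k, j*n2 + l} = A_{i j} * B_{k l}. *)
Definition kron (R : nzRingType) m1 n1 m2 n2
    (A : 'M[R]_(m1, n1)) (B : 'M[R]_(m2, n2)) : 'M[R]_(m1 * m2, n1 * n2) :=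
  \matrix_(r, c) (natmx A (r %/ m2)%N (c %/ n2)%N * natmx B (r %% m2)%N (c %% n2)%N).

(* D(B) for B : K x L: the KL x K matrix stacking diag(b_{1l},...,b_{Kl}),
   l = 1..L.  Row l*K + k (0-based, l < L, k < K), column c has entry
   b_{k l} if k = c and 0 otherwise. *)
Definition Dmx (R : nzRingType) K L (B : 'M[R]_(K, L)) : 'M[R]_(K * L, K) :=
  \matrix_(r, c) (if (r %% K)%N == (c : nat) then natmx B (r %% K)%N (r %/ K)%N else 0).

(* (N * (N+1) rows and N(N+1) = N*N + N rows are identified via mulnC.) *)
Definition Ahat (R : nzRingType) N (A : 'M[R]_(N.+1, N)) : 'M[R]_(N.+1 * N, N * N + N) :=
  row_mx (castmx (mulnC N N.+1, erefl (N * N)%N) (kron (1%:M : 'M[R]_N) A)) (colsub (fun j : 'I_N => lift ord0 j) (Dmx A)).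

(* Main.v *)
Require Import Defs.
From HB Require Import structures.
From mathcomp Require Import all_boot all_order all_algebra.
Import GRing.Theory Num.Theory.
Local Open Scope ring_scope.

Lemma sum_blocks (R : nzRingType) (N a : nat) (F : nat -> R) :
  \sum_(c < a * N) F c = \sum_(j < a) \sum_(m < N) F (j * N + m)%N.
Proof.
elim: a => [|a IH]; first by rewrite mul0n !big_ord0.
rewrite big_ord_recr /= -IH -!(big_mkord xpredT).
rewrite (big_cat_nat _ (n := a * N)) //=; last by rewrite mulSn leq_addl.
congr (_ + _).
have -> : (a * N = 0 + a * N)%N by []. rewrite big_addn mulSn add0n addnK big_mkord.
by apply: eq_bigr => i _; rewrite addnC.
Qed.

Lemma natmx_ord (R : nzRingType) m n (A : 'M[R]_(m, n)) (i : 'I_m) (j : 'I_n) :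
  natmx A i j = A i j.
Proof. by rewrite /natmx !valK. Qed.


Lemma key (C : numClosedFieldType) (N : nat) (hN : (0 < N)%N)
  (A : 'M[C]_(N.+1, N))
  (hA : forall f : 'I_N -> 'I_N.+1, injective f -> row_free (rowsub f A))
  (u : 'rV[C]_(N * N + N)) : u *m (Ahat A)^T = 0 -> u = 0.
Proof.
move=> hu.
pose xn := fun c : nat => natmx u 0 c.
pose yn := fun j : nat => natmx u 0 (N * N + j).
have E : forall (l : 'I_N) (k : 'I_N.+1),
  \sum_(m < N) A k m * xn (l * N + m)%N +
  (if k == ord0 then 0 else yn k.-1 * A k l) = 0.
  move=> l k.
  have hr : (l * N.+1 + k < N.+1 * N)%N.
    apply: (@leq_trans (l.+1 * N.+1)); first by rewrite mulSnr ltn_add2l.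
    by rewrite mulnC leq_mul2l ltn_ord orbT.
  have := congr1 (fun M : 'rV[C]_(N.+1 * N) => M 0 (Ordinal hr)) hu.
  rewrite !mxE big_split_ord /=.
  under eq_bigr do rewrite /Ahat tr_row_mx col_mxEu !mxE castmxE !mxE /=.
  under [X in _ + X]eq_bigr do rewrite /Ahat tr_row_mx col_mxEd !mxE /=.
  have hd : ((l * N.+1 + k) %/ N.+1 = l)%N.
    by rewrite divnMDl // divn_small ?addn0.
  have hm : ((l * N.+1 + k) %% N.+1 = k)%N.
    by rewrite modnMDl modn_small.
  rewrite hd hm.
  have S1 : \sum_(i < N * N) u 0 (lshift N i) *
     (natmx (1%:M : 'M[C]_N) l (i %/ N) * natmx A k (i %% N)) =
     \sum_(m < N) A k m * xn (l * N + m)%N.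
    rewrite (eq_bigr (fun i : 'I_(N * N) => xn i * (natmx (1%:M : 'M[C]_N) l (i %/ N) * natmx A k (i %% N)))); last by move=> i _; rewrite /xn /= -[u 0 (lshift N i)]natmx_ord.
    etransitivity; first exact: (sum_blocks _ N N
       (fun c => xn c * (natmx (1%:M : 'M[C]_N) l (c %/ N) * natmx A k (c %% N)))).
    rewrite (bigD1 l) //= [X in _ + X]big1 ?addr0.
      apply: eq_bigr => m _.
      rewrite divnMDl // modnMDl divn_small // modn_small // addn0 !natmx_ord mxE eqxx mul1r mulrC.
      by [].
    move=> j hj; apply: big1 => m _.
    rewrite divnMDl // divn_small // addn0 !natmx_ord mxE eq_sym (negbTE hj).
    by rewrite mul0r mulr0.
  have S2 : \sum_(i < N) u 0 (rshift (N * N) i) *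
     (if ((k : nat) == bump 0 i) then natmx A k l else 0) =
     (if k == ord0 then 0 else yn k.-1 * A k l).
    case: (eqVneq k ord0) => [-> | hk].
      by apply: big1 => i _; rewrite /bump /= mulr0.
    have hk' : (k.-1 < N)%N.
      by rewrite -ltnS prednK ?ltn_ord // lt0n.
    rewrite (bigD1 (Ordinal hk')) //= big1 ?addr0 => [|j hj].
      rewrite /bump /= add1n prednK ?lt0n // eqxx natmx_ord.
      by rewrite -[u 0 _]natmx_ord.
    rewrite /bump /= add1n.
    case: eqP => [hkj|]; last by rewrite mulr0.
    by move: hj; rewrite -val_eqE /= hkj /= eqxx.
  by rewrite S1 S2.
pose X : 'M[C]_N := \matrix_(m, l) xn (l * N + m)%N.
pose B := rowsub (lift ord0) A.
pose y : 'rV[C]_N := \row_i yn i.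
have E0 : row ord0 A *m X = 0.
  apply/rowP => l; rewrite !mxE -[RHS](E l ord0) eqxx addr0.
  by apply: eq_bigr => m _; rewrite !mxE.
have EB : B *m X = - (diag_mx y *m B).
  apply/matrixP => i l; rewrite mul_diag_mx !mxE.
  have := E l (lift ord0 i).
  rewrite eq_sym (negbTE (neq_lift _ _)) lift0 /=.
  move/eqP; rewrite addr_eq0 => /eqP h.
  transitivity (\sum_(m < N) A (lift ord0 i) m * xn (l * N + m)%N).
    by apply: eq_bigr => m _; rewrite /B /X !mxE.
  exact: h.
have Bu : B \in unitmx.
  by rewrite -row_free_unit; apply: hA; apply: lift_inj.
pose c := row ord0 A *m invmx B.
have hc : c *m B = row ord0 A by rewrite mulmxKV.
clearbody c.
have c0 : forall i, c 0 i != 0.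
  move=> i0; apply/negP => /eqP ci0.
  pose f := fun i : 'I_N => if i == i0 then ord0 else lift ord0 i.
  have finj : injective f.
    move=> i j; rewrite /f.
    case: (eqVneq i i0) => [->|hi]; case: (eqVneq j i0) => [->|hj] // h.
    all: try exact: lift_inj h.

  have := row_free_inj (hA f finj).
  move=> inj.
  pose v : 'rV[C]_N := c - 'e_i0.
  have hv : v *m rowsub f A = 0 *m rowsub f A.
    rewrite mul0mx mulmxBl -rowE row_rowsub /f eqxx.
    have -> : c *m rowsub f A = c *m B.
      apply/rowP => j; rewrite !mxE; apply: eq_bigr => i _.
      rewrite !mxE /f; case: (eqVneq i i0) => [->|//].
      by rewrite ci0 !mul0r.
    by rewrite hc subrr.
  have := inj _ _ _ hv.
  move/rowP => /(_ i0); rewrite !mxE eqxx ci0 /= sub0r => /eqP.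
  by rewrite eqxx mulr1n oppr_eq0 oner_eq0.
have cy : c *m diag_mx y = 0.
  apply: (row_free_inj (F:=C) (A:=B)); first by rewrite row_free_unit.
  have DB : diag_mx y *m B = - (B *m X) by rewrite EB opprK.
  by rewrite /= mul0mx -mulmxA DB mulmxN mulmxA hc E0 oppr0.
have y0 : y = 0.
  apply/rowP => i; move/rowP: cy => /(_ i); rewrite mul_mx_diag !mxE.
  by move/eqP; rewrite mulf_eq0 (negbTE (c0 i)) /= => /eqP.
have BX0 : B *m X = 0.
  rewrite EB y0; apply/matrixP => i j; rewrite mul_diag_mx !mxE mul0r oppr0.
  by [].
have X0 : X = 0 by rewrite -(mulKmx Bu X) BX0 mulmx0.
apply/rowP => j; rewrite [RHS]mxE -natmx_ord.
case: (splitP j) => [a ha | a ha]; rewrite ha.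
- have h1 : (a %% N < N)%N by rewrite ltn_pmod.
  have h2 : (a %/ N < N)%N by rewrite ltn_divLR // ltn_ord.
  have := congr1 (fun M : 'M[C]_N => M (Ordinal h1) (Ordinal h2)) X0.
  rewrite !mxE /= -divn_eq => <-.
  by [].
- have := congr1 (fun M : 'rV[C]_N => M 0 a) y0; rewrite !mxE => <-.
  by [].
Qed.

Theorem lemma3 (C : numClosedFieldType) (N : nat) (hN : (0 < N)%N)
  (A : 'M[C]_(N.+1, N))
  (hA : forall f : 'I_N -> 'I_N.+1, injective f -> row_free (rowsub f A)) :
  \rank (Ahat A) = (N * N.+1)%N.
Proof.
have hf : row_free (Ahat A)^T.
  rewrite -kermx_eq0; apply/eqP/row_matrixP => i; rewrite row0.
  apply: (key _ _ hN _ hA); by rewrite -row_mul mulmx_ker row0.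
rewrite -mxrank_tr (eqP hf) mulnS addnC.
by [].
Qed.
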